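(* For all integers $n\ge0$, $k\ge1$ and all $0\le\beta\le\alpha$, $$\sum_{i=1}^{k}F_{ni}(\alpha,\beta)=\int_\beta^\alpha\!\!\int_0^\beta\bar\lambda\sum_{i=1}^{k}F_{(n-1)i}(\eta,\sigma)\,d\sigma\,d\eta+4\int_\beta^\alpha\!\!\int_0^\beta\frac{\eta\sigma}{(\eta^2-\sigma^2)^2}F_{n(k-1)}(\eta,\sigma)\,d\sigma\,d\eta.$$
   Context: Let $\bar\lambda\ge0$. For integers $n,k\ge0$ and $0\le\beta<\alpha$, $F_{nk}(\alpha,\beta)=\frac{\bar\lambda^{n+1}\alpha^n\beta^n}{n!(n+1)!}(\alpha-\beta)\frac{\log^k\left(\frac{\alpha+\beta}{\alpha-\beta}\right)}{k!}$, extended continuously by $0$ on the diagonal $\alpha=\beta$; $F_{nk}\equiv0$ if $n<0$ or $k<0$. *)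

(* Defs.v *)
From Stdlib Require Import Reals ZArith.
Open Scope R_scope.

(* F_{nk}(alpha,beta), with integer indices n k; identically 0 if n<0 or k<0,
   and 0 unless beta < alpha (continuous extension by 0 on the diagonal;
   only 0 <= beta <= alpha is ever used). *)
Definition F (lam : R) (n k : Z) (a b : R) : R :=
  if orb (Z.ltb n 0) (Z.ltb k 0) then 0 else
  if Rlt_dec b a then
    let nn := Z.to_nat n in let kk := Z.to_nat k in
    lam ^ (S nn) * a ^ nn * b ^ nn / (INR (fact nn) * INR (fact (S nn)))
    * (a - b) * (ln ((a + b) / (a - b))) ^ kk / INR (fact kk)
  else 0.

(* \sum_{i=1}^{k} F_{n i}(a,b)  (k >= 1 assumed where used) *)
Definition sumF (lam : R) (n : Z) (k : nat) (a b : R) : R :=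
  sum_f_R0 (fun j => F lam n (Z.of_nat (S j)) a b) (Nat.pred k).

Definition RInt_eq (f : R -> R) (a b v : R) : Prop :=
  exists pr : Riemann_integrable f a b, RiemannInt pr = v.

Definition improper_lower (f : R -> R) (a b v : R) : Prop :=
  (a = b /\ v = 0) \/
  (a < b /\ forall eps, 0 < eps -> exists delta, 0 < delta /\
     forall c, a < c < a + delta -> c <= b ->
       exists w, RInt_eq f c b w /\ Rabs (w - v) < eps).

(* \int_beta^alpha \int_0^beta h(eta,sigma) dsigma deta = v, the inner integral
   being a proper Riemann integral for each eta in (beta, alpha], the outer one
   an (at most) improper integral at eta = beta. *)
Definition double_int (h : R -> R -> R) (beta alpha v : R) : Prop :=
  exists G : R -> R,
    (forall eta, beta < eta <= alpha -> RInt_eq (fun s => h eta s) 0 beta (G eta))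
    /\ improper_lower G beta alpha v.

(* Main.v *)
Require Import Defs.
From Stdlib Require Import Reals ZArith Lra Lia.
From Coquelicot Require Import Coquelicot.
Open Scope R_scope.

Definition g (j : nat) (y : R) := y ^ j / INR (fact j).
Definition gp (j : nat) (y : R) := match j with O => 0 | S j' => g j' y end.
Definition Lf a b := ln ((a+b)/(a-b)).
Definition cf lam m := lam ^ (S m) / (INR (fact m) * INR (fact (S m))).

Lemma F_eq lam m j a b : b < a ->
  F lam (Z.of_nat m) (Z.of_nat j) a b = cf lam m * a^m * b^m * (a-b) * g j (Lf a b).
Proof.
intros H. unfold F.
replace (Z.of_nat m <? 0)%Z with false by (symmetry; apply Z.ltb_ge; lia).
replace (Z.of_nat j <? 0)%Z with false by (symmetry; apply Z.ltb_ge; lia).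
simpl orb. destruct (Rlt_dec b a); [|lra].
rewrite !Nat2Z.id. unfold cf, g, Lf.
field. split; [apply INR_fact_neq_0|]. split; apply INR_fact_neq_0.
Qed.

Lemma F_diag lam p j a b : ~ b < a -> F lam p j a b = 0.
Proof. intros H. unfold F. destruct (_ || _)%bool; auto. destruct (Rlt_dec b a); tauto. Qed.

Lemma F_neg lam p j a b : (p < 0)%Z -> F lam p j a b = 0.
Proof. intros H. unfold F. replace (p <? 0)%Z with true by (symmetry; apply Z.ltb_lt; lia). reflexivity. Qed.
Lemma F_negk lam p j a b : (j < 0)%Z -> F lam p j a b = 0.
Proof. intros H. unfold F. replace (j <? 0)%Z with true by (symmetry; apply Z.ltb_lt; lia).
 rewrite Bool.orb_true_r. reflexivity. Qed.

Lemma is_derive_g j h x dh : is_derive h x dh ->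
  is_derive (fun x => g j (h x)) x (gp j (h x) * dh).
Proof.
intros H. unfold g.
eapply is_derive_ext. { intro t. unfold Rdiv. rewrite Rmult_comm. reflexivity. }
eapply (is_derive_ext (fun t => / INR (fact j) * h t ^ j)). { intro t. reflexivity. }
assert (H2 := is_derive_scal _ _ (/ INR (fact j)) _ (is_derive_pow h j x dh H)).
replace (gp j (h x) * dh) with (/ INR (fact j) * (INR j * dh * h x ^ Init.Nat.pred j)); auto.
destruct j; simpl gp. { simpl. ring. }
unfold g. rewrite fact_simpl, mult_INR. simpl pred.
field. split; [apply INR_fact_neq_0|]. apply not_0_INR. lia.
Qed.

Lemma der_mult f h x df dh : is_derive f x df -> is_derive h x dh ->
  is_derive (fun t => f t * h t) x (df * h x + f x * dh).
Proof. intros H1 H2. apply (is_derive_mult f h x df dh H1 H2). intros; apply Rmult_comm. Qed.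

Lemma der_plus (f h : R -> R) x df dh : is_derive f x df -> is_derive h x dh ->
  is_derive (fun t => f t + h t) x (df + dh).
Proof. intros H1 H2. apply (is_derive_plus f h x df dh H1 H2). Qed.

Ltac sidec := repeat split; try lra;
  try (apply Rmult_lt_0_compat; [lra | apply Rinv_0_lt_compat; lra]).

Lemma der_Lf_a a b : 0 <= b < a -> is_derive (fun a => Lf a b) a (-2*b/(a^2-b^2)).
Proof. intros H. unfold Lf. auto_derive. sidec.
 field. repeat split; nra. Qed.
Lemma der_Lf_b a b : 0 <= b < a -> is_derive (fun b => Lf a b) b (2*a/(a^2-b^2)).
Proof. intros H. unfold Lf. auto_derive. sidec.
 field. repeat split; nra. Qed.

Lemma is_derive_eq (f : R -> R) (x l l' : R) : is_derive f x l -> l = l' -> is_derive f x l'.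
Proof. intros H ->. exact H. Qed.

Section Der.
Variables (lam : R) (n : nat).

Definition Un i a b := cf lam n * a^n * b^n * (a-b) * g (S i) (Lf a b).
Definition T i a b := cf lam n * ((INR n * a^(pred n) * b^n * (a-b) + a^n*b^n) * g (S i) (Lf a b)
   + a^n*b^n*(a-b) * g i (Lf a b) * (-2*b/(a^2-b^2))).

Lemma D1 i a b : 0 <= b < a -> is_derive (fun a => Un i a b) a (T i a b).
Proof.
intros H. unfold Un.
eapply is_derive_eq.
- apply der_mult. 2:{ apply is_derive_g. apply der_Lf_a. exact H. }
  auto_derive. exact I. reflexivity.
- unfold T. simpl gp. destruct n; simpl pred; simpl INR; field; repeat split; nra.
Qed.

Lemma Fm1_eq i a b : b < a ->
  F lam (Z.of_nat n) (Z.of_nat i - 1) a b = cf lam n * a^n * b^n * (a-b) * gp i (Lf a b).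
Proof.
intros H. destruct i.
- simpl. rewrite F_negk by lia. ring.
- replace (Z.of_nat (S i) - 1)%Z with (Z.of_nat i) by lia. rewrite F_eq by exact H. reflexivity.
Qed.

Lemma Fn1_eq i a b : b < a ->
  lam * F lam (Z.of_nat n - 1) (Z.of_nat (S i)) a b =
  cf lam n * INR n * INR (S n) * a^(pred n) * b^(pred n) * (a-b) * g (S i) (Lf a b).
Proof.
intros H. destruct n as [|m].
- simpl. rewrite F_neg by lia. ring.
- replace (Z.of_nat (S m) - 1)%Z with (Z.of_nat m) by lia. rewrite F_eq by exact H.
  unfold cf. simpl pred. rewrite (fact_simpl (S m)), (fact_simpl m), !mult_INR.
  assert (INR (fact m) <> 0) by apply INR_fact_neq_0.
  assert (INR (S m) <> 0) by (apply not_0_INR; lia).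
  assert (INR (S (S m)) <> 0) by (apply not_0_INR; lia).
  simpl pow. field. auto.
Qed.

Lemma D2 i a b : 0 <= b < a -> is_derive (fun b => T i a b) b
  (lam * F lam (Z.of_nat n - 1) (Z.of_nat (S i)) a b
   + 4*a*b/(a^2-b^2)^2 * (F lam (Z.of_nat n) (Z.of_nat i) a b - F lam (Z.of_nat n) (Z.of_nat i - 1) a b)).
Proof.
intros H. unfold T.
eapply is_derive_eq.
- apply is_derive_scal. apply der_plus.
  + apply der_mult. 2:{ apply is_derive_g. apply der_Lf_b. exact H. }
    auto_derive. exact I. reflexivity.
  + apply der_mult. 2:{ auto_derive. repeat split; nra. reflexivity. }
    apply der_mult. 2:{ apply is_derive_g. apply der_Lf_b. exact H. }
    auto_derive. exact I. reflexivity.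
- rewrite Fn1_eq, Fm1_eq, F_eq by lra. simpl gp.
  destruct n; simpl pred; simpl INR; simpl pow; field; repeat split; nra.
Qed.
End Der.

Lemma F_hom lam p j a t : 0 < a ->
  F lam p j a (a*t) = a^(2*Z.to_nat p+1) * F lam p j 1 t.
Proof.
intros Ha. unfold F. destruct (_ || _)%bool; [ring|].
destruct (Rlt_dec (a*t) a) as [H1|H1]; destruct (Rlt_dec t 1) as [H2|H2]; try ring;
 try (exfalso; nra).
replace ((a + a*t)/(a - a*t)) with ((1+t)/(1-t)) by (field; split; nra).
rewrite Rpow_mult_distr, pow_add, pow_mult, pow1. simpl pow.
rewrite !Rmult_1_r, Rpow_mult_distr.
field. repeat split; apply INR_fact_neq_0.
Qed.

Lemma sumF_hom lam p k a t : 0 < a ->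
  sumF lam p k a (a*t) = a^(2*Z.to_nat p+1) * sumF lam p k 1 t.
Proof.
intros Ha. unfold sumF. induction (Nat.pred k) as [|N IH].
- cbn [sum_f_R0]. apply F_hom; exact Ha.
- cbn [sum_f_R0]. rewrite IH, F_hom by exact Ha. ring.
Qed.

Lemma g_le_exp j y : 0 <= y -> g j y <= exp y.
Proof.
intros Hy. eapply Rle_trans; [|apply (exp_ge_taylor y j Hy)].
destruct j; cbn [sum_f_R0]. { unfold g; lra. }
unfold g. assert (0 <= sum_f_R0 (fun k => y ^ k / INR (fact k)) j).
{ apply cond_pos_sum. intro. apply Rmult_le_pos. apply pow_le; lra.
  apply Rlt_le, Rinv_0_lt_compat, INR_fact_lt_0. }
lra.
Qed.

Lemma exd_cont (f : R -> R) x : ex_derive f x -> continuous f x.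
Proof. intro H. apply (ex_derive_continuous (K:=R_AbsRing) (V:=R_NormedModule)). exact H. Qed.

Lemma locally_R (x : R) (P : R -> Prop) (d : R) : 0 < d ->
  (forall y, Rabs (y - x) < d -> P y) -> locally x P.
Proof. intros Hd H. exists (mkposreal d Hd). intros y Hy. apply H. exact Hy. Qed.

Lemma cont_eps (f : R -> R) x :
  (forall eps, 0 < eps -> exists d, 0 < d /\ forall y, Rabs (y - x) < d -> Rabs (f y - f x) < eps) ->
  continuous f x.
Proof.
intros H. apply (proj2 (filterlim_locally (F:=locally x) f (f x))). intros eps.
destruct (H eps (cond_pos eps)) as [d [Hd Hy]].
apply (locally_R x _ d Hd). intros y Hyx. apply Hy. exact Hyx.
Qed.

Lemma F_cont lam p j t : -1 < t -> continuous (fun t => F lam p j 1 t) t.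
Proof.
intros Ht.
destruct (Z_lt_le_dec p 0) as [Hp|Hp].
{ apply (continuous_ext (fun _ => 0)). intro; rewrite F_neg; auto. apply continuous_const. }
destruct (Z_lt_le_dec j 0) as [Hj|Hj].
{ apply (continuous_ext (fun _ => 0)). intro; rewrite F_negk; auto. apply continuous_const. }
destruct (Z_of_nat_complete _ Hp) as [m ->].
destruct (Z_of_nat_complete _ Hj) as [jj ->].
destruct (Rlt_le_dec t 1) as [H1|H1].
- apply (continuous_ext_loc _ (fun s => cf lam m * 1^m * s^m * (1-s) * g jj (Lf 1 s))).
  { apply (locally_R t _ (1 - t)); [lra|]. intros y Hy.
    apply Rabs_def2 in Hy. rewrite F_eq by lra. reflexivity. }
  apply exd_cont. unfold g, Lf. auto_derive. repeat split; try lra.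
  apply Rmult_lt_0_compat; [lra | apply Rinv_0_lt_compat; lra].
- destruct H1 as [H1|H1].
  + apply (continuous_ext_loc _ (fun _ => 0)).
    { apply (locally_R t _ (t - 1)); [lra|]. intros y Hy.
      apply Rabs_def2 in Hy. rewrite F_diag by lra. reflexivity. }
    apply continuous_const.
  + subst t. apply cont_eps. intros eps Heps.
    rewrite (F_diag _ _ _ 1 1) by lra.
    set (A := Rabs (cf lam m) / INR (fact jj)).
    set (M := A^2 * INR (fact (2*jj)) * 2).
    assert (HA : 0 <= A). { unfold A. apply Rmult_le_pos. apply Rabs_pos.
      apply Rlt_le, Rinv_0_lt_compat, INR_fact_lt_0. }
    assert (HM : 0 <= M). { unfold M. apply Rmult_le_pos; [|lra]. apply Rmult_le_pos.
      nra. apply pos_INR. }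
    exists (Rmin 1 (eps^2/(M+1))). split.
    { apply Rmin_glb_lt. lra. apply Rdiv_lt_0_compat; nra. }
    intros y Hy. apply Rabs_def2 in Hy. destruct Hy as [Hy1 Hy2].
    assert (Hd1 := Rmin_l 1 (eps^2/(M+1))). assert (Hd2 := Rmin_r 1 (eps^2/(M+1))).
    destruct (Rlt_le_dec y 1) as [Hy|Hy]; [|rewrite F_diag by lra; rewrite Rminus_0_r, Rabs_R0; lra].
    rewrite F_eq by lra. rewrite Rminus_0_r, pow1.
    assert (Hy0 : 0 < y) by lra.
    set (L := Lf 1 y).
    assert (HL : exp L = (1+y)/(1-y)). { unfold L, Lf. apply exp_ln.
      apply Rdiv_lt_0_compat; lra. }
    assert (HL0 : 0 <= L). { unfold L, Lf. rewrite <- ln_1. apply ln_le. lra.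
      apply (Rmult_le_reg_r (1-y)); [lra|]. field_simplify; lra. }
    assert (Hg := g_le_exp (2*jj) L HL0). unfold g in Hg.
    rewrite HL in Hg.
    assert (Hg2 : L^(2*jj) <= INR (fact (2*jj)) * ((1+y)/(1-y))).
    { assert (Hf := INR_fact_lt_0 (2*jj)).
      replace (L^(2*jj)) with (L^(2*jj)/INR(fact(2*jj)) * INR(fact(2*jj))) by (field; lra).
      rewrite (Rmult_comm (INR _)). apply Rmult_le_compat_r; [lra|exact Hg]. }
    assert (Hym : 0 <= y^m <= 1). { split. apply pow_le; lra.
      rewrite <- (pow1 m). apply pow_incr. lra. }
    assert (HX : ((1-y) * L^jj)^2 <= INR (fact (2*jj)) * 2 * (1-y)).
    { rewrite Rpow_mult_distr, <- pow_mult, Nat.mul_comm.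
      apply Rle_trans with ((1-y)^2 * (INR (fact (2*jj)) * ((1+y)/(1-y)))).
      apply Rmult_le_compat_l; [nra|exact Hg2].
      replace ((1-y)^2 * (INR (fact (2*jj)) * ((1+y)/(1-y)))) with
        (INR (fact (2*jj)) * (1+y) * (1-y)) by (field; lra).
      assert (0 <= INR (fact (2*jj))) by apply pos_INR.
      apply Rmult_le_compat_r; [lra|]. apply Rmult_le_compat_l; lra. }
    assert (HB : (cf lam m * 1 * y^m / INR (fact jj))^2 <= A^2).
    { assert (Hf := INR_fact_lt_0 jj).
      replace ((cf lam m * 1 * y^m / INR (fact jj))^2) with ((cf lam m)^2 * (y^m)^2 / INR(fact jj)^2) by (field; lra).
      replace (A^2) with ((cf lam m)^2 / INR(fact jj)^2) by (unfold A; rewrite <- (pow2_abs (cf lam m)); field; lra).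
      unfold Rdiv. apply Rmult_le_compat_r. apply Rlt_le, Rinv_0_lt_compat. nra.
      assert (0 <= cf lam m ^2) by nra. assert ((y^m)^2 <= 1) by nra.
      rewrite <- (Rmult_1_r (cf lam m ^ 2)) at 2. apply Rmult_le_compat_l; lra. }
    set (X := (1-y) * L^jj) in *.
    assert (Heq : cf lam m * 1 * y ^ m * (1 - y) * g jj L = (cf lam m * 1 * y^m / INR (fact jj)) * X).
    { unfold X, g. field. apply INR_fact_neq_0. }
    rewrite Heq. set (B := cf lam m * 1 * y ^ m / INR (fact jj)) in *.
    assert (Hsq : (B*X)^2 < eps^2).
    { rewrite Rpow_mult_distr.
      apply Rle_lt_trans with (A^2 * (INR (fact (2*jj)) * 2 * (1-y))).
      apply Rmult_le_compat; try nra. 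
      replace (A ^ 2 * (INR (fact (2 * jj)) * 2 * (1 - y))) with (M * (1-y)) by (unfold M; ring).
      assert (1 - y < eps^2/(M+1)) by lra.
      apply Rle_lt_trans with (M * (eps^2/(M+1))). apply Rmult_le_compat_l; lra.
      apply (Rmult_lt_reg_r (M+1)); [lra|]. field_simplify; nra. }
    apply Rabs_def1; nra.
Qed.

Lemma cont_plus (f h : R -> R) x : continuous f x -> continuous h x ->
  continuous (fun y => f y + h y) x.
Proof. intros. apply (continuous_plus f h x); auto. Qed.
Lemma cont_mult (f h : R -> R) x : continuous f x -> continuous h x ->
  continuous (fun y => f y * h y) x.
Proof. intros. apply (continuous_mult f h x); auto. Qed.
Lemma cont_const (c x : R) : continuous (fun _ : R => c) x.
Proof. apply continuous_const. Qed.
Lemma cont_comp (f h : R -> R) x : continuous f x -> continuous h (f x) ->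
  continuous (fun y => h (f y)) x.
Proof. intros. apply (continuous_comp f h x); auto. Qed.

Lemma cont_sum (f : nat -> R -> R) x N : (forall i, continuous (f i) x) ->
  continuous (fun y => sum_f_R0 (fun i => f i y) N) x.
Proof.
intros H. induction N as [|N IH].
- apply H.
- cbn [sum_f_R0]. apply cont_plus; auto.
Qed.

Lemma der_sum (f : nat -> R -> R) (df : nat -> R) x N :
  (forall i, (i <= N)%nat -> is_derive (f i) x (df i)) ->
  is_derive (fun y => sum_f_R0 (fun i => f i y) N) x (sum_f_R0 df N).
Proof.
intros H. induction N as [|N IH].
- apply H; lia.
- cbn [sum_f_R0]. apply der_plus; auto.
Qed.

Lemma cont_to_eps (f : R -> R) x : continuous f x ->
  forall eps, 0 < eps -> exists d, 0 < d /\ forall y, Rabs (y - x) < d -> Rabs (f y - f x) < eps.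
Proof.
intros H eps Heps.
destruct (proj1 (filterlim_locally (F:=locally x) f (f x)) H (mkposreal eps Heps)) as [d Hd].
exists d. split. apply cond_pos. intros y Hy. apply (Hd y). exact Hy.
Qed.

Lemma RInt_eq_of (f : R -> R) a b : ex_RInt f a b -> RInt_eq f a b (RInt f a b).
Proof. intros H. exists (ex_RInt_Reals_0 _ _ _ H). symmetry. apply RInt_Reals. Qed.

Lemma is_RInt_R_unique (f : R -> R) a b l : is_RInt f a b l -> RInt f a b = l.
Proof. intros H. apply (is_RInt_unique f a b l H). Qed.

Lemma ex_RInt_cont (f : R -> R) a b : (forall z, Rmin a b <= z <= Rmax a b -> continuous f z) ->
  ex_RInt f a b.
Proof. intros H. apply (ex_RInt_continuous f a b H). Qed.

Lemma is_RInt_plusR (f h : R -> R) a b If Ih : is_RInt f a b If -> is_RInt h a b Ih ->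
  is_RInt (fun y => f y + h y) a b (If + Ih).
Proof. intros. apply (is_RInt_plus f h a b If Ih); auto. Qed.
Lemma is_RInt_scalR (f : R -> R) a b k If : is_RInt f a b If ->
  is_RInt (fun y => k * f y) a b (k * If).
Proof. intros. apply (is_RInt_scal f a b k If); auto. Qed.
Lemma is_RInt_minusR (f h : R -> R) a b If Ih : is_RInt f a b If -> is_RInt h a b Ih ->
  is_RInt (fun y => f y - h y) a b (If - Ih).
Proof. intros. apply (is_RInt_minus f h a b If Ih); auto. Qed.
Lemma is_RInt_extR (f h : R -> R) a b l : (forall x, Rmin a b < x < Rmax a b -> f x = h x) ->
  is_RInt f a b l -> is_RInt h a b l.
Proof. intros. apply (is_RInt_ext f h a b l); auto. Qed.
Lemma is_RInt_derR (f df : R -> R) a b :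
  (forall x, Rmin a b <= x <= Rmax a b -> is_derive f x (df x)) ->
  (forall x, Rmin a b <= x <= Rmax a b -> continuous df x) ->
  is_RInt df a b (f b - f a).
Proof. intros. apply (is_RInt_derive f df a b); auto. Qed.

Lemma improper_zero a b : a <= b -> improper_lower (fun _ => 0) a b 0.
Proof.
intros H. destruct H as [H|H]; [right|left; auto].
split; auto. intros eps Heps. exists 1. split; [lra|]. intros c Hc Hcb.
exists 0. split; [|rewrite Rminus_0_r, Rabs_R0; lra].
assert (E : RInt (fun _ : R => 0) c b = 0).
{ rewrite RInt_const. unfold scal; simpl; unfold mult; simpl. ring. }
assert (Hex : ex_RInt (fun _ : R => 0) c b). { apply ex_RInt_cont. intros; apply cont_const. }
pose proof (RInt_eq_of (fun _ => 0) c b Hex) as HH. rewrite E in HH. exact HH.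
Qed.

Lemma sumF_diag lam p k a : sumF lam p k a a = 0.
Proof.
unfold sumF. induction (Nat.pred k) as [|N IH]; cbn [sum_f_R0].
- apply F_diag; lra.
- rewrite IH, F_diag; lra.
Qed.

Lemma sumF_cont lam p k t : -1 < t -> continuous (fun t => sumF lam p k 1 t) t.
Proof. intros H. unfold sumF. apply (cont_sum (fun i t => F lam p (Z.of_nat (S i)) 1 t)).
intros i. apply F_cont. exact H. Qed.

Lemma tele (A B C : nat -> R) lam K N : C O = 0 -> (forall i, C (S i) = B i) ->
  sum_f_R0 (fun i => lam * A i + K * (B i - C i)) N = lam * sum_f_R0 A N + K * B N.
Proof.
intros H0 HS. induction N as [|N IH]; cbn [sum_f_R0].
- rewrite H0. ring.
- rewrite IH, HS. ring.
Qed.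

Definition Psi lam n k a b := sum_f_R0 (fun i => T lam n i a b) (pred k).
Definition h1 lam n k (eta s : R) := lam * sumF lam (Z.of_nat n - 1) k eta s.
Definition h2 lam n k (eta s : R) := eta * s / (eta ^ 2 - s ^ 2) ^ 2
        * F lam (Z.of_nat n) (Z.of_nat k - 1) eta s.

Lemma S1_der lam n k eta s : (1 <= k)%nat -> 0 <= s < eta ->
  is_derive (fun s => Psi lam n k eta s) s (h1 lam n k eta s + 4 * h2 lam n k eta s).
Proof.
intros Hk H. unfold Psi.
eapply is_derive_eq. { apply der_sum. intros i _. apply D2. exact H. }
rewrite (tele (fun i => F lam (Z.of_nat n - 1) (Z.of_nat (S i)) eta s)
   (fun i => F lam (Z.of_nat n) (Z.of_nat i) eta s)
   (fun i => F lam (Z.of_nat n) (Z.of_nat i - 1) eta s) lam (4*eta*s/(eta^2-s^2)^2)).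
- unfold h1, h2, sumF. replace (Z.of_nat k - 1)%Z with (Z.of_nat (pred k)) by lia.
  unfold Rdiv. ring.
- apply F_negk. lia.
- intros i. replace (Z.of_nat (S i) - 1)%Z with (Z.of_nat i) by lia. reflexivity.
Qed.

Lemma Psi0 lam n k eta : 0 < eta -> Psi lam n k eta 0 = 0.
Proof.
intros He. unfold Psi.
assert (HT : forall i, T lam n i eta 0 = 0).
{ intros i. unfold T, Lf.
  replace ((eta + 0)/(eta - 0)) with 1 by (field; lra). rewrite ln_1.
  unfold g. simpl pow. unfold Rdiv. ring. }
induction (pred k) as [|N IH]; cbn [sum_f_R0]. apply HT. rewrite IH, HT. ring.
Qed.

Lemma is_derive_ext_locR (f h : R -> R) x l : locally x (fun t => f t = h t) ->
  is_derive f x l -> is_derive h x l.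
Proof. intros. apply (is_derive_ext_loc f h x l); auto. Qed.

Lemma U_der lam n k x b : 0 <= b < x ->
  is_derive (fun x => sumF lam (Z.of_nat n) k x b) x (Psi lam n k x b).
Proof.
intros H.
apply (is_derive_ext_locR (fun x => sum_f_R0 (fun i => Un lam n i x b) (pred k))).
{ apply (locally_R x _ (x - b)); [lra|]. intros y Hy. apply Rabs_def2 in Hy.
  unfold sumF. apply sum_eq. intros i _. unfold Un. rewrite F_eq by lra. reflexivity. }
apply der_sum. intros i _. apply D1. exact H.
Qed.

Lemma Psi_cont lam n k x b : 0 <= b < x -> continuous (fun x => Psi lam n k x b) x.
Proof.
intros H. unfold Psi. apply (cont_sum (fun i x => T lam n i x b)). intros i.
apply exd_cont. unfold T, g, Lf. auto_derive. repeat split; try nra.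
all: apply Rmult_lt_0_compat; [lra | apply Rinv_0_lt_compat; lra].
Qed.

Lemma cont_ext (f h : R -> R) x : (forall y, f y = h y) -> continuous f x -> continuous h x.
Proof. intros. apply (continuous_ext f h x); auto. Qed.

Lemma h1_cont lam n k eta s : 0 < eta -> -1 < s / eta -> continuous (h1 lam n k eta) s.
Proof.
intros He Hs.
apply (cont_ext (fun s => lam * (eta ^ (2 * Z.to_nat (Z.of_nat n - 1) + 1) *
   sumF lam (Z.of_nat n - 1) k 1 (s / eta)))).
{ intros s'. unfold h1. rewrite <- sumF_hom by exact He.
  replace (eta * (s'/eta)) with s' by (field; lra). reflexivity. }
apply cont_mult. apply cont_const. apply cont_mult. apply cont_const.
apply (cont_comp (fun s => s / eta) (fun t => sumF lam (Z.of_nat n - 1) k 1 t)).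
- apply exd_cont. auto_derive. lra.
- apply sumF_cont. exact Hs.
Qed.

Lemma h2_cont lam n k eta s : 0 <= s < eta -> continuous (h2 lam n k eta) s.
Proof.
intros H.
apply (cont_ext (fun s => eta * s / (eta ^ 2 - s ^ 2) ^ 2 * (eta ^ (2 * Z.to_nat (Z.of_nat n) + 1) *
   F lam (Z.of_nat n) (Z.of_nat k - 1) 1 (s / eta)))).
{ intros s'. unfold h2. rewrite <- F_hom by lra.
  replace (eta * (s'/eta)) with s' by (field; lra). reflexivity. }
apply cont_mult.
- apply exd_cont. auto_derive. assert (eta*eta - s*s > 0) by nra. rewrite !Rmult_1_r. apply Rmult_integral_contrapositive; split; lra.
- apply cont_mult. apply cont_const.
  apply (cont_comp (fun s => s / eta) (fun t => F lam (Z.of_nat n) (Z.of_nat k - 1) 1 t)).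
  + apply exd_cont. auto_derive. lra.
  + apply F_cont. apply Rlt_le_trans with 0. lra. apply Rmult_le_pos. lra.
    apply Rlt_le, Rinv_0_lt_compat. lra.
Qed.

Definition phi1 lam n k t := lam * sumF lam (Z.of_nat n - 1) k 1 t.
Definition Phi1 lam n k s := RInt (phi1 lam n k) 0 s.
Definition e1 n := (2 * Z.to_nat (Z.of_nat n - 1) + 1)%nat.

Lemma phi1_cont lam n k t : -1 < t -> continuous (phi1 lam n k) t.
Proof. intros H. unfold phi1. apply cont_mult. apply cont_const. apply sumF_cont. exact H. Qed.

Lemma ex_phi1 lam n k a b : -1 < a -> -1 < b -> ex_RInt (phi1 lam n k) a b.
Proof.
intros Ha Hb. apply ex_RInt_cont. intros z Hz. apply phi1_cont.
assert (Rmin a b > -1) by (apply Rmin_glb_lt; lra). lra.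
Qed.

Lemma Phi1_cont lam n k s : -1 < s -> continuous (Phi1 lam n k) s.
Proof.
intros H. unfold Phi1. apply (continuous_RInt_1 (phi1 lam n k) 0 s).
apply (locally_R s _ (s + 1)); [lra|]. intros z Hz. apply Rabs_def2 in Hz.
apply (RInt_correct (phi1 lam n k)). apply ex_phi1; lra.
Qed.

Lemma G1_eq lam n k eta beta : 0 < eta -> 0 <= beta ->
  RInt (h1 lam n k eta) 0 beta = eta ^ e1 n * eta * Phi1 lam n k (beta / eta).
Proof.
intros He Hb. apply is_RInt_R_unique.
assert (H1 : is_RInt (phi1 lam n k) (/eta * 0 + 0) (/eta * beta + 0) (Phi1 lam n k (beta/eta))).
{ replace (/eta * 0 + 0) with 0 by ring. replace (/eta * beta + 0) with (beta/eta) by (field; lra).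
  apply (RInt_correct (phi1 lam n k)). apply ex_phi1. lra.
  apply Rlt_le_trans with 0. lra. apply Rmult_le_pos. lra. apply Rlt_le, Rinv_0_lt_compat. lra. }
apply (is_RInt_comp_lin (phi1 lam n k) (/eta) 0 0 beta) in H1.
apply (is_RInt_scalR _ _ _ (eta ^ e1 n * eta)) in H1.
eapply is_RInt_extR; [|exact H1].
intros x _. unfold h1, phi1, scal; simpl; unfold mult; simpl.
replace (sumF lam (Z.of_nat n - 1) k eta x) with (sumF lam (Z.of_nat n - 1) k eta (eta * (/eta * x + 0)))
 by (f_equal; field; lra).
rewrite sumF_hom by exact He. unfold e1. field. lra.
Qed.

Definition G1e lam n k beta eta := eta ^ e1 n * eta * Phi1 lam n k (beta / eta).

Lemma G1e_cont lam n k beta eta : 0 <= beta -> 0 < eta -> continuous (G1e lam n k beta) eta.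
Proof.
intros Hb He. unfold G1e. apply cont_mult.
- apply exd_cont. auto_derive. exact I.
- apply (cont_comp (fun eta => beta / eta) (Phi1 lam n k)).
  + apply exd_cont. auto_derive. lra.
  + apply Phi1_cont. apply Rlt_le_trans with 0. lra. apply Rmult_le_pos. lra.
    apply Rlt_le, Rinv_0_lt_compat. lra.
Qed.

Lemma ex_G1e lam n k beta a b : 0 <= beta -> 0 < a -> 0 < b -> ex_RInt (G1e lam n k beta) a b.
Proof.
intros Hb Ha Hb'. apply ex_RInt_cont. intros z Hz. apply G1e_cont. lra.
assert (Rmin a b > 0) by (apply Rmin_glb_lt; lra). lra.
Qed.

Lemma swapR (f : R -> R) a b : ex_RInt f a b -> RInt f b a = - RInt f a b.
Proof. intros H. rewrite <- (opp_RInt_swap f a b H). reflexivity. Qed.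

Lemma I1_lim lam n k beta alpha : 0 < beta -> 0 < alpha ->
  forall eps, 0 < eps -> exists d, 0 < d /\ forall c, Rabs (c - beta) < d ->
   Rabs (RInt (G1e lam n k beta) c alpha - RInt (G1e lam n k beta) beta alpha) < eps.
Proof.
intros Hb Ha eps Heps.
assert (Hc : continuous (fun x => RInt (G1e lam n k beta) alpha x) beta).
{ apply (continuous_RInt_1 (G1e lam n k beta) alpha beta).
  apply (locally_R beta _ beta Hb). intros z Hz. apply Rabs_def2 in Hz.
  apply (RInt_correct (G1e lam n k beta)). apply ex_G1e; lra. }
destruct (cont_to_eps _ _ Hc eps Heps) as [d [Hd H]].
exists (Rmin d beta). split. apply Rmin_glb_lt; lra.
intros c Hcb. assert (Hm1 := Rmin_l d beta). assert (Hm2 := Rmin_r d beta).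
assert (Hcc : Rabs (c - beta) < d) by lra. specialize (H c Hcc).
apply Rabs_def2 in Hcb.
rewrite (swapR _ alpha c), (swapR _ alpha beta) by (apply ex_G1e; lra).
replace (- RInt (G1e lam n k beta) alpha c - - RInt (G1e lam n k beta) alpha beta)
  with (- (RInt (G1e lam n k beta) alpha c - RInt (G1e lam n k beta) alpha beta)) by ring.
rewrite Rabs_Ropp. exact H.
Qed.

Lemma U_lim lam n k beta : 0 < beta ->
  forall eps, 0 < eps -> exists d, 0 < d /\ forall c, Rabs (c - beta) < d ->
   Rabs (sumF lam (Z.of_nat n) k c beta) < eps.
Proof.
intros Hb eps Heps.
set (e := (2 * Z.to_nat (Z.of_nat n) + 1)%nat).
set (psi := fun c => c ^ e * sumF lam (Z.of_nat n) k 1 (beta / c)).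
assert (Hc : continuous psi beta).
{ unfold psi. apply cont_mult. apply exd_cont. auto_derive. exact I.
  apply (cont_comp (fun c => beta / c) (fun t => sumF lam (Z.of_nat n) k 1 t)).
  apply exd_cont. auto_derive. lra. apply sumF_cont.
  replace (beta/beta) with 1 by (field; lra). lra. }
assert (H0 : psi beta = 0).
{ unfold psi. replace (beta/beta) with 1 by (field; lra). rewrite sumF_diag. ring. }
destruct (cont_to_eps _ _ Hc eps Heps) as [d [Hd H]].
exists (Rmin d beta). split. apply Rmin_glb_lt; lra.
intros c Hcb. assert (Hm1 := Rmin_l d beta). assert (Hm2 := Rmin_r d beta).
assert (Hcc : Rabs (c - beta) < d) by lra. specialize (H c Hcc). rewrite H0, Rminus_0_r in H.
apply Rabs_def2 in Hcb.
replace (sumF lam (Z.of_nat n) k c beta) with (psi c). exact H.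
unfold psi, e. rewrite <- sumF_hom by lra. f_equal. field. lra.
Qed.

Lemma RInt_eq_is (f : R -> R) a b l : is_RInt f a b l -> RInt_eq f a b l.
Proof.
intros H. assert (Hex : ex_RInt f a b) by (exists l; exact H).
rewrite <- (is_RInt_R_unique f a b l H). apply RInt_eq_of. exact Hex.
Qed.

Lemma main_case lam n k alpha beta : (1 <= k)%nat -> 0 < beta -> beta < alpha ->
  exists I1 I2 : R,
    double_int (fun eta sigma => lam * sumF lam (Z.of_nat n - 1) k eta sigma)
      beta alpha I1 /\
    double_int (fun eta sigma =>
        eta * sigma / (eta ^ 2 - sigma ^ 2) ^ 2
        * F lam (Z.of_nat n) (Z.of_nat k - 1) eta sigma)
      beta alpha I2 /\
    sumF lam (Z.of_nat n) k alpha beta = I1 + 4 * I2.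
Proof.
intros Hk Hb Hba.
set (I1 := RInt (G1e lam n k beta) beta alpha).
set (Ua := sumF lam (Z.of_nat n) k alpha beta).
exists I1, ((Ua - I1) / 4).
set (G1 := fun eta => RInt (h1 lam n k eta) 0 beta).
set (G2 := fun eta => RInt (h2 lam n k eta) 0 beta).
assert (Hex1 : forall eta, beta < eta -> ex_RInt (h1 lam n k eta) 0 beta).
{ intros eta He. apply ex_RInt_cont. intros z Hz. rewrite Rmin_left, Rmax_right in Hz by lra.
  apply h1_cont. lra. apply Rlt_le_trans with 0. lra. apply Rmult_le_pos. lra.
  apply Rlt_le, Rinv_0_lt_compat. lra. }
assert (Hex2 : forall eta, beta < eta -> ex_RInt (h2 lam n k eta) 0 beta).
{ intros eta He. apply ex_RInt_cont. intros z Hz. rewrite Rmin_left, Rmax_right in Hz by lra.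
  apply h2_cont. lra. }
assert (HG1 : forall eta, 0 < eta -> G1 eta = G1e lam n k beta eta).
{ intros eta He. unfold G1, G1e. apply G1_eq; lra. }
assert (HG2 : forall eta, beta < eta -> G2 eta = / 4 * (Psi lam n k eta beta - G1e lam n k beta eta)).
{ intros eta He.
  assert (Ht : is_RInt (fun s => h1 lam n k eta s + 4 * h2 lam n k eta s) 0 beta
      (Psi lam n k eta beta - Psi lam n k eta 0)).
  { apply (is_RInt_derR (fun s => Psi lam n k eta s)).
    - intros x Hx. rewrite Rmin_left, Rmax_right in Hx by lra. apply S1_der; auto. lra.
    - intros x Hx. rewrite Rmin_left, Rmax_right in Hx by lra. apply cont_plus.
      apply h1_cont. lra. apply Rlt_le_trans with 0. lra. apply Rmult_le_pos. lra.
      apply Rlt_le, Rinv_0_lt_compat. lra.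
      apply cont_mult. apply cont_const. apply h2_cont. lra. }
  assert (Ht2 : is_RInt (fun s => h1 lam n k eta s + 4 * h2 lam n k eta s) 0 beta
      (G1 eta + 4 * G2 eta)).
  { apply is_RInt_plusR. apply (RInt_correct (h1 lam n k eta)). apply Hex1; lra.
    apply is_RInt_scalR. apply (RInt_correct (h2 lam n k eta)). apply Hex2; lra. }
  apply is_RInt_R_unique in Ht. apply is_RInt_R_unique in Ht2. rewrite Ht in Ht2.
  rewrite Psi0 in Ht2 by lra. rewrite <- HG1 by lra. lra. }
split; [|split].
- exists G1. split.
  + intros eta He. apply RInt_eq_of. apply Hex1. lra.
  + right. split; [exact Hba|]. intros eps Heps.
    destruct (I1_lim lam n k beta alpha Hb ltac:(lra) eps Heps) as [d [Hd H]].
    exists d. split; [exact Hd|]. intros c Hc Hca.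
    exists (RInt (G1e lam n k beta) c alpha). split.
    * apply RInt_eq_is. eapply is_RInt_extR.
      2:{ apply (RInt_correct (G1e lam n k beta)). apply ex_G1e; lra. }
      intros x Hx. rewrite HG1. reflexivity. assert (Rmin c alpha >= c) by (apply Rle_ge, Rmin_glb; lra). lra.
    * apply H. rewrite Rabs_right; lra.
- exists G2. split.
  + intros eta He. apply RInt_eq_of. apply Hex2. lra.
  + right. split; [exact Hba|]. intros eps Heps.
    destruct (I1_lim lam n k beta alpha Hb ltac:(lra) eps Heps) as [d1 [Hd1 H1]].
    destruct (U_lim lam n k beta Hb eps Heps) as [d2 [Hd2 H2]].
    exists (Rmin d1 d2). split. apply Rmin_glb_lt; lra.
    intros c Hc Hca. assert (Hm1 := Rmin_l d1 d2). assert (Hm2 := Rmin_r d1 d2).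
    set (Uc := sumF lam (Z.of_nat n) k c beta).
    exists (/ 4 * ((Ua - Uc) - RInt (G1e lam n k beta) c alpha)). split.
    * apply RInt_eq_is. eapply is_RInt_extR.
      2:{ apply is_RInt_scalR. apply is_RInt_minusR.
          - apply (is_RInt_derR (fun x => sumF lam (Z.of_nat n) k x beta) (fun x => Psi lam n k x beta)).
            + intros x Hx. assert (Rmin c alpha >= c) by (apply Rle_ge, Rmin_glb; lra).
              apply U_der. lra.
            + intros x Hx. assert (Rmin c alpha >= c) by (apply Rle_ge, Rmin_glb; lra).
              apply Psi_cont. lra.
          - apply (RInt_correct (G1e lam n k beta)). apply ex_G1e; lra. }
      intros x Hx. assert (Rmin c alpha >= c) by (apply Rle_ge, Rmin_glb; lra).
      rewrite HG2 by lra. reflexivity.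
    * assert (A1 : Rabs (c - beta) < d1) by (rewrite Rabs_right; lra).
      assert (A2 : Rabs (c - beta) < d2) by (rewrite Rabs_right; lra).
      specialize (H1 c A1). specialize (H2 c A2). fold I1 in H1. fold Uc in H2.
      apply Rabs_def2 in H1. apply Rabs_def2 in H2. apply Rabs_def1; lra.
- field.
Qed.

Lemma double_zero (h : R -> R -> R) beta alpha : beta <= alpha ->
  (beta = alpha \/ beta = 0) -> double_int h beta alpha 0.
Proof.
intros H Hc. exists (fun _ => 0). split.
- intros eta He. destruct Hc as [Hc|Hc]; [lra|]. subst beta.
  apply RInt_eq_is. apply (is_RInt_point (h eta) 0).
- apply improper_zero. exact H.
Qed.

Lemma sumF_zero lam n k a : 0 < a -> sumF lam (Z.of_nat n) k a 0 = 0.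
Proof.
intros Ha. unfold sumF. induction (pred k) as [|N IH]; cbn [sum_f_R0].
2: rewrite IH, Rplus_0_l.
all: rewrite F_eq by lra; unfold Lf; replace ((a+0)/(a-0)) with 1 by (field; lra);
  rewrite ln_1; unfold g; simpl pow; unfold Rdiv; ring.
Qed.

Theorem lemma2 (lam : R) (n k : nat) (alpha beta : R) :
  0 <= lam -> (1 <= k)%nat -> 0 <= beta -> beta <= alpha ->
  exists I1 I2 : R,
    double_int (fun eta sigma => lam * sumF lam (Z.of_nat n - 1) k eta sigma)
      beta alpha I1 /\
    double_int (fun eta sigma =>
        eta * sigma / (eta ^ 2 - sigma ^ 2) ^ 2
        * F lam (Z.of_nat n) (Z.of_nat k - 1) eta sigma)
      beta alpha I2 /\
    sumF lam (Z.of_nat n) k alpha beta = I1 + 4 * I2.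
Proof.
intros Hl Hk Hb Hba.
destruct (Req_dec beta alpha) as [E|E].
{ exists 0, 0. split; [|split]; try (apply double_zero; auto).
  subst. rewrite sumF_diag. ring. }
destruct (Req_dec beta 0) as [E0|E0].
{ exists 0, 0. split; [|split]; try (apply double_zero; auto).
  subst. rewrite sumF_zero by lra. ring. }
apply main_case; auto; lra.
Qed.
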